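(* $$\mathrm{toi}(K_t \square K_s) = \begin{cases} t+s-1 &\text{ if } t, s\geq 2 \text{ and } \max\{s,t\} \geq 4\\ 4 &\text{ if } s=t=3\\ 3 &\text{ if } s=3 \text{ and } t=2 \end{cases}$$
   Context: $\mathrm{toi}(G)$ is the maximum $t$ such that $G$ contains a totally odd strong immersion of $K_t$ (an injective map of $V(K_t)$ into $V(G)$ with pairwise edge-disjoint odd paths joining each pair of terminals, no terminal being an interior vertex of any path). $G\square H$ is the Cartesian product: vertex set $V(G)\times V(H)$, with $(g_1,h_1)\sim(g_2,h_2)$ iff ($g_1=g_2$ and $h_1h_2\in E(H)$) or ($h_1=h_2$ and $g_1g_2\in E(G)$). *)

(* Defs.v *)
(* Graphs are symmetric irreflexive relations on finite types. *)
From mathcomp Require Import all_boot.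
Set Implicit Arguments. Unset Strict Implicit. Unset Printing Implicit Defensive.

Definition complete_graph (t : nat) : rel 'I_t := fun i j => i != j.

Arguments complete_graph t : clear implicits.

Definition cart_prod (A B : finType) (eA : rel A) (eB : rel B) : rel (A * B) :=
  fun u v => ((u.1 == v.1) && eB u.2 v.2) || ((u.2 == v.2) && eA u.1 v.1).

Definition walk_edges (V : finType) (x : V) (p : seq V) : seq (V * V) :=
  zip (x :: p) p.

Definition odd_path (V : finType) (e : rel V) (x y : V) (p : seq V) : bool :=
  [&& path e x p, uniq (x :: p), last x p == y & odd (size p)].

Definition interior (V : finType) (x : V) (p : seq V) : seq V :=
  behead (belast x p).

Definition edge_disjoint (V : finType) (x : V) (p : seq V) (y : V) (q : seq V) : bool :=
  ~~ has (fun uv : V * V =>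
            has (fun ab : V * V => [set uv.1; uv.2] == [set ab.1; ab.2])
                (walk_edges y q))
         (walk_edges x p).

(* G contains a totally odd strong immersion of K_n: terminals f, and for each
   pair i < j an odd path P i j (stored as its tail) from f i to f j; paths are
   pairwise edge-disjoint and no terminal is an interior vertex of any path. *)
Definition toi_immersion (V : finType) (e : rel V) (n : nat) : Prop :=
  exists (f : 'I_n -> V) (P : 'I_n -> 'I_n -> seq V),
    [/\ injective f,
        (forall i j : 'I_n, i < j -> odd_path e (f i) (f j) (P i j)),
        (forall i j k l : 'I_n, i < j -> k < l -> (i, j) != (k, l) ->
            edge_disjoint (f i) (P i j) (f k) (P k l))
      & (forall i j k : 'I_n, i < j -> f k \notin interior (f i) (P i j))].

Definition toi_is (V : finType) (e : rel V) (m : nat) : Prop :=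
  toi_immersion e m /\ (forall n, toi_immersion e n -> n <= m).

(* Main.v *)
Require Import Defs.
From mathcomp Require Import all_boot.
From mathcomp Require Import zify.
Set Implicit Arguments. Unset Strict Implicit. Unset Printing Implicit Defensive.

Section Edges.
Variable T : eqType.

Definition same_edge (uv ab : T * T) : bool :=
  ((uv.1 == ab.1) && (uv.2 == ab.2)) || ((uv.1 == ab.2) && (uv.2 == ab.1)).

Definition wedges (x : T) (p : seq T) : seq (T * T) := zip (x :: p) p.

Definition edisj (x : T) (p : seq T) (y : T) (q : seq T) : bool :=
  ~~ has (fun uv => has (same_edge uv) (wedges y q)) (wedges x p).

Definition used_ok (acc : seq (T * T)) (es : seq (T * T)) :=
  ~~ has (fun uv => has (same_edge uv) acc) es.

End Edges.

Lemma set2_eq (V : finType) (a b c d : V) :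
  ([set a; b] == [set c; d]) = same_edge (a, b) (c, d).
Proof.
rewrite /same_edge /=.
apply/idP/idP.
  move/eqP=> H.
  have Ha : a \in [set c; d] by rewrite -H set21.
  have Hb : b \in [set c; d] by rewrite -H set22.
  have Hc : c \in [set a; b] by rewrite H set21.
  have Hd : d \in [set a; b] by rewrite H set22.
  move: Ha Hb Hc Hd; rewrite !in_set2.
  by do 4 (case/orP=> /eqP ?); subst; rewrite ?eqxx ?orbT.
by case/orP=> /andP[/eqP-> /eqP->] //; rewrite setUC.
Qed.

Lemma edge_disjointE (V : finType) (x : V) p y q :
  edge_disjoint x p y q = edisj x p y q.
Proof.
rewrite /edge_disjoint /edisj; congr (~~ _); apply: eq_has => uv.
by apply: eq_has => ab; rewrite set2_eq; case: uv; case: ab.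
Qed.

Lemma zip_map2 (A B C D : Type) (f : A -> C) (g : B -> D) s t :
  zip (map f s) (map g t) = map (fun xy => (f xy.1, g xy.2)) (zip s t).
Proof. by elim: s t => [|x s IH] [|y t] //=; rewrite IH. Qed.

Lemma wedges_map (A B : eqType) (c : A -> B) x p :
  wedges (c x) (map c p) = map (fun uv => (c uv.1, c uv.2)) (wedges x p).
Proof. by rewrite /wedges -zip_map2. Qed.

Lemma edisj_map (A B : eqType) (c : A -> B) : injective c -> forall x p y q,
  edisj (c x) (map c p) (c y) (map c q) = edisj x p y q.
Proof.
move=> ci x p y q; rewrite /edisj !wedges_map has_map; congr (~~ _).
apply: eq_has => uv /=; rewrite has_map; apply: eq_has => ab /=.
by rewrite /same_edge /= !(inj_eq ci).
Qed.

Section Search.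
Variable T : eqType.
Variable e : rel T.

Fixpoint ext (N : seq T) (u : T) (k : nat) : seq (seq T) :=
  match k with
  | 0 => [:: [::]]
  | k'.+1 => flatten [seq [seq v :: s | s <- ext [seq w <- N | w != v] v k'] | v <- N & e u v]
  end.

Lemma mem_ext N u s : uniq s -> all (mem N) s -> path e u s -> s \in ext N u (size s).
Proof.
elim: s u N => [|v s IH] u N //= /andP[vs us] /andP[vN aN] /andP[euv ps].
apply/flattenP; exists [seq v :: s0 | s0 <- ext [seq w <- N | w != v] v (size s)].
  by apply/mapP; exists v => //; rewrite mem_filter euv.
apply/mapP; exists s => //; apply: IH => //.
apply/allP => w ws; rewrite inE mem_filter andbC; move: (allP aN w ws); rewrite inE => -> /=.
by apply/eqP=> E; subst w; rewrite ws in vs.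
Qed.

Definition cands (N : seq T) (u v : T) : seq (seq T) :=
  [seq rcons s v | s <- [seq s <- flatten [seq ext N u k | k <- iota 0 (size N).+1]
                          | uniq (u :: rcons s v) && e (last u s) v && odd (size s).+1]].

Lemma mem_cands N u v p :
  path e u p -> uniq (u :: p) -> last u p == v -> odd (size p) ->
  all (mem N) (behead (belast u p)) ->
  p \in cands N u v.
Proof.
case/lastP: p => [|s y] //.
rewrite belast_rcons /= rcons_path last_rcons size_rcons => /andP[ps ey] up /eqP yv op aN.
subst y; apply/mapP; exists s => //.
rewrite mem_filter; apply/andP; split; first by rewrite /= up ey.
have us : uniq s.
  by move: up; rewrite /= mem_rcons inE rcons_uniq; case/andP=> _ /andP[].
apply/flattenP; exists (ext N u (size s)); last exact: mem_ext.
apply/mapP; exists (size s) => //; rewrite mem_iota /= add0n ltnS.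
apply: uniq_leq_size.
  by move: up; rewrite /= mem_rcons inE rcons_uniq; case/andP=> _ /andP[].
by move=> x xs; move/allP: aN; apply.
Qed.

Fixpoint search (acc : seq (T * T)) (CL : seq (seq (seq (T * T)))) : bool :=
  match CL with
  | [::] => true
  | C :: CL' => has (fun es => if used_ok acc es then search (es ++ acc) CL' else false) C
  end.

Lemma search_gen (I : eqType) (C : I -> seq (seq (T * T))) (W : I -> seq (T * T))
  (L : seq I) acc : uniq L ->
  (forall i, i \in L -> W i \in C i) ->
  (forall i j, i \in L -> j \in L -> i != j -> used_ok (W i) (W j)) ->
  (forall i, i \in L -> used_ok acc (W i)) ->
  search acc (map C L).
Proof.
elim: L acc => [|ij L IH] acc //= /andP[ijL uL] Hc Hd Ha.
apply/hasP; exists (W ij); first by apply: Hc; rewrite inE eqxx.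
rewrite Ha ?inE ?eqxx //=; apply: IH => //.
- by move=> kl kL; apply: Hc; rewrite inE kL orbT.
- by move=> kl mn kL mL; apply: Hd; rewrite inE ?kL ?mL orbT.
move=> kl kL; rewrite /used_ok.
apply/hasPn => uv uvin; rewrite has_cat negb_or; apply/andP; split.
  have nk : ij != kl by apply: contraNneq ijL => ->.
  have := Hd ij kl; rewrite !inE kL eqxx !orbT => /(_ isT isT nk) /hasPn /(_ uv uvin) //.
have := Ha kl; rewrite inE kL orbT => /(_ isT) /hasPn /(_ uv uvin) //.
Qed.

Variable vs : seq T.

Fixpoint tuples (k : nat) : seq (seq T) :=
  match k with
  | 0 => [:: [::]]
  | k'.+1 => flatten [seq [seq x :: t | t <- tuples k'] | x <- vs]
  end.

Lemma mem_tuples (l : seq T) : all (mem vs) l -> l \in tuples (size l).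
Proof.
elim: l => [|x l IH] //= /andP[xv lv]; apply/flattenP.
exists [seq x :: t | t <- tuples (size l)]; first by apply/mapP; exists x.
by apply/mapP; exists l => //; apply: IH.
Qed.

Definition cboth N (u v : T) : seq (seq (T * T)) :=
  [seq wedges u p | p <- cands N u v] ++ [seq wedges v p | p <- cands N v u].

End Search.

Definition ppairs (n : nat) : seq (nat * nat) :=
  [seq ab <- [seq (a, b) | a <- iota 0 n, b <- iota 0 n] | ab.1 < ab.2].

Definition nocheck (e : rel nat) (vs : seq nat) (n : nat) : bool :=
  all (fun l => if sorted ltn l then
        ~~ search [::] [seq cboth e [seq x <- vs | x \notin l] (nth 0 l ab.1) (nth 0 l ab.2)
                       | ab <- ppairs n]
        else true) (tuples vs n).

Lemma ppairs_uniq n : uniq (ppairs n).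
Proof.
apply: filter_uniq; apply: allpairs_uniq; rewrite ?iota_uniq //.
by move=> [a b] [c d] _ _ /= [-> ->].
Qed.

Lemma mem_ppairs n ab : (ab \in ppairs n) = [&& ab.1 < ab.2 & ab.2 < n].
Proof.
case: ab => a b; rewrite mem_filter /=.
apply/andP/andP => [[ab /allpairsP [[x y] /= [xi yi [ex ey]]]]|[ab bn]].
  by subst; split=> //; move: yi; rewrite mem_iota.
split=> //; apply/allpairsP; exists (a, b); rewrite /= !mem_iota /= bn.
by rewrite (ltn_trans ab bn).
Qed.

Lemma nocheck_sound (V : finType) (e : rel V) (eN : rel nat) (c : V -> nat) vs n :
  injective c -> (forall x y, e x y -> eN (c x) (c y)) -> (forall x, c x \in vs) ->
  nocheck eN vs n.+1 -> ~ toi_immersion e n.+1.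
Proof.
move=> ci ce cv H [f [P [finj Hp Hd Hi]]].
have cfi : injective (c \o f) by move=> a b /= /ci /finj.
set l0 := map (c \o f) (enum 'I_n.+1).
set l := sort leq l0.
have ul0 : uniq l0 by rewrite map_inj_uniq ?enum_uniq.
have ul : uniq l by rewrite sort_uniq.
have sl : size l = n.+1 by rewrite size_sort size_map size_enum_ord.
have ml : l =i l0 by apply: mem_sort.
have srt : sorted ltn l.
  by rewrite ltn_sorted_uniq_leq ul sort_sorted //; exact: leq_total.
have := allP H l; rewrite -{1}sl mem_tuples; last first.
  by apply/allP => x; rewrite inE ml => /mapP [i _ ->]; exact: cv.
move=> /(_ isT); rewrite srt => /negP; apply.
pose idx a := odflt ord0 [pick i | c (f i) == nth 0 l a].
have idxP : forall a, a < n.+1 -> c (f (idx a)) = nth 0 l a.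
  move=> a an; rewrite /idx; case: pickP => [i /eqP //|].
  move=> none; have : nth 0 l a \in l0 by rewrite -ml mem_nth ?sl.
  by case/mapP=> i _ E; move: (none i); rewrite /= E eqxx.
have idx_inj : forall a b, a < n.+1 -> b < n.+1 -> idx a = idx b -> a = b.
  move=> a b an bn E; have := idxP a an; rewrite E idxP // => /eqP.
  by rewrite nth_uniq ?sl // => /eqP.
set N := [seq x <- vs | x \notin l].
have Hc : forall i j : 'I_n.+1, i < j -> map c (P i j) \in cands eN N (c (f i)) (c (f j)).
  move=> i j ij.
  case/and4P: (Hp i j ij) => pp up lp op.
  apply: mem_cands.
  + by apply: homo_path pp.
  + by rewrite -map_cons map_inj_uniq.
  + by rewrite last_map (inj_eq ci).
  + by rewrite size_map.
  apply/allP => x; rewrite belast_map behead_map => /mapP [z zin ->].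
  rewrite inE mem_filter cv andbT ml.
  apply/negP => /mapP [k _ /= /ci zk]; subst z.
  by move: (Hi i j k ij); rewrite /interior zin.
pose ord2 (ab : nat * nat) : 'I_n.+1 * 'I_n.+1 :=
  if idx ab.1 < idx ab.2 then (idx ab.1, idx ab.2) else (idx ab.2, idx ab.1).
pose W ab := wedges (c (f (ord2 ab).1)) (map c (P (ord2 ab).1 (ord2 ab).2)).
have ne_idx : forall ab, ab \in ppairs n.+1 -> idx ab.1 != idx ab.2.
  move=> [a b]; rewrite mem_ppairs /= => /andP [ab bn].
  apply/eqP => E; have Eab := idx_inj a b (ltn_trans ab bn) bn E.
  by rewrite Eab ltnn in ab.
have ord2_lt : forall ab, ab \in ppairs n.+1 -> (ord2 ab).1 < (ord2 ab).2.
  move=> [a b] abin; have := ne_idx (a, b) abin; rewrite /ord2 /=.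
  case: ifP => //= /negbT; rewrite -leqNgt leq_eqVlt => + H0.
  by case/orP=> // /eqP/ord_inj E; rewrite E eqxx in H0.
apply: (search_gen (W := W)).
- exact: ppairs_uniq.
- move=> [a b] abin; move: (ord2_lt _ abin); rewrite /W /cboth mem_cat /ord2 /=.
  have [a1 a2] : a < n.+1 /\ b < n.+1.
    by move: abin; rewrite mem_ppairs => /andP [x y]; split=> //; apply: ltn_trans x y.
  case: ifP => h /= lt.
    by rewrite -(idxP a) // -(idxP b) //; apply/orP; left; apply: map_f; apply: Hc.
  by rewrite -(idxP a) // -(idxP b) //; apply/orP; right; apply: map_f; apply: Hc.
- move=> ab ab' abin abin' ne.
  have -> : used_ok (W ab) (W ab') =
    edisj (c (f (ord2 ab').1)) (map c (P (ord2 ab').1 (ord2 ab').2))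
          (c (f (ord2 ab).1)) (map c (P (ord2 ab).1 (ord2 ab).2)) by [].
  rewrite edisj_map // -edge_disjointE; apply: Hd; try exact: ord2_lt.
  apply: contra ne => /eqP; case: ab abin => a b; case: ab' abin' => a' b'.
  rewrite !mem_ppairs /= => /andP[ab' bn'] /andP[ab bn].
  have an := ltn_trans ab bn; have an' := ltn_trans ab' bn'.
  rewrite /ord2 /=; case: ifP => _; case: ifP => _ [E1 E2].
  - by rewrite (idx_inj _ _ an' an E1) (idx_inj _ _ bn' bn E2).
  - have h1 := idx_inj _ _ an' bn E1; have h2 := idx_inj _ _ bn' an E2.
    by subst; rewrite ltnNge ltnW in ab'.
  - have h1 := idx_inj _ _ bn' an E1; have h2 := idx_inj _ _ an' bn E2.
    by subst; rewrite ltnNge ltnW in ab'.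
  - by rewrite (idx_inj _ _ an' an E2) (idx_inj _ _ bn' bn E1).
by move=> ab _; rewrite /used_ok; apply/hasPn.
Qed.

Lemma toi_transfer (V W : finType) (e : rel V) (e' : rel W) (h : V -> W) n :
  injective h -> (forall x y, e x y -> e' (h x) (h y)) ->
  toi_immersion e n -> toi_immersion e' n.
Proof.
move=> hi he [f [P [finj Hp Hd Hi]]].
exists (h \o f), (fun i j => map h (P i j)); split.
- by move=> a b /= /hi /finj.
- move=> i j ij; case/and4P: (Hp i j ij) => pp up lp op.
  apply/and4P; split.
  + by rewrite /=; apply: homo_path pp.
  + by move: up; rewrite -(map_inj_uniq hi).
  + by rewrite /= last_map (inj_eq hi).
  + by rewrite size_map.
- move=> i j k l ij kl ne; rewrite /= !edge_disjointE.
  by rewrite (edisj_map hi) -edge_disjointE; apply: Hd.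
move=> i j k ij; rewrite /interior /= belast_map behead_map mem_map //.
exact: Hi.
Qed.

Lemma all_os n (os : seq 'I_n) (p : pred 'I_n) :
  (forall i, i \in os) -> all p os -> forall i, p i.
Proof. by move=> osP /allP H i; apply: H. Qed.

Definition concrete_ok (V : finType) (e : rel V) n (os : seq 'I_n) (f : 'I_n -> V)
   (P : 'I_n -> 'I_n -> seq V) : bool :=
  [&& all (fun i : 'I_n => all (fun j : 'I_n => (f i == f j) ==> (i == j)) os) os,
      all (fun i : 'I_n => all (fun j : 'I_n => (i < j) ==> odd_path e (f i) (f j) (P i j)) os) os,
      all (fun i : 'I_n => all (fun j : 'I_n => all (fun k : 'I_n => all (fun l : 'I_n =>
         [&& i < j, k < l & (i, j) != (k, l)] ==> edisj (f i) (P i j) (f k) (P k l)) os) os) os) os &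
      all (fun i : 'I_n => all (fun j : 'I_n => all (fun k =>
         (i < j) ==> (f k \notin interior (f i) (P i j))) os) os) os].

Lemma concrete_sound (V : finType) (e : rel V) n (os : seq 'I_n) f P :
  (forall i, i \in os) -> concrete_ok e os f P -> toi_immersion e n.
Proof.
move=> osP /and4P [H1 H2 H3 H4].
exists f, P; split.
- move=> i j E; apply/eqP.
  by move/allP: H1 => /(_ i (osP i)) /allP /(_ j (osP j)); rewrite E eqxx.
- move=> i j ij.
  by move/allP: H2 => /(_ i (osP i)) /allP /(_ j (osP j)); rewrite ij.
- move=> i j k l ij kl ne; rewrite edge_disjointE.
  move/allP: H3 => /(_ i (osP i)) /allP /(_ j (osP j)) /allP /(_ k (osP k)) /allP /(_ l (osP l)).
  by rewrite ij kl ne.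
move=> i j k ij.
by move/allP: H4 => /(_ i (osP i)) /allP /(_ j (osP j)) /allP /(_ k (osP k)); rewrite ij.
Qed.

Definition o3 : seq 'I_3 := [:: @Ordinal 3 0 isT; @Ordinal 3 1 isT; @Ordinal 3 2 isT].
Definition o4 : seq 'I_4 := [:: @Ordinal 4 0 isT; @Ordinal 4 1 isT; @Ordinal 4 2 isT; @Ordinal 4 3 isT].
Lemma o3P i : i \in o3.
Proof. by case: i => [[|[|[|//]]] Hi]. Qed.
Lemma o4P i : i \in o4.
Proof. by case: i => [[|[|[|[|//]]]] Hi]. Qed.

Definition z2 (a : nat) : 'I_2 := if a is 1 then @Ordinal 2 1 isT else @Ordinal 2 0 isT.
Definition z3 (a : nat) : 'I_3 :=
  match a with 1 => @Ordinal 3 1 isT | 2 => @Ordinal 3 2 isT | _ => @Ordinal 3 0 isT end.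

Definition v33 (a b : nat) : 'I_3 * 'I_3 := (z3 a, z3 b).
Definition f33 (i : 'I_4) := nth (v33 0 0) [:: v33 0 0; v33 0 1; v33 0 2; v33 1 0] i.
Definition P33 (i j : 'I_4) : seq ('I_3 * 'I_3) :=
  match val i, val j with
  | 1, 3 => [:: v33 1 1; v33 1 2; v33 1 0]
  | 2, 3 => [:: v33 2 2; v33 2 0; v33 1 0]
  | _, _ => [:: f33 j]
  end.

Lemma imm33 : toi_immersion (cart_prod (complete_graph 3) (complete_graph 3)) 4.
Proof.
apply: (concrete_sound (os := o4) (f := f33) (P := P33)); first exact: o4P.
by vm_compute.
Qed.

Unset Implicit Arguments.
Section Nat.
Variables t1 s1 : nat.
Hypothesis s1ge : 3 <= s1.

Definition eN2 (u v : nat * nat) : bool :=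
  ((u.1 == v.1) && (u.2 != v.2)) || ((u.2 == v.2) && (u.1 != v.1)).

Definition nx (c : nat) := if c == s1 then 1 else c.+1.

Definition F (k : nat) : nat * nat := if k <= s1 then (0, k) else (k - s1, 0).

Definition isLong (i j : nat) := (0 < i <= s1) && (s1 < j).

Definition PP (i j : nat) : seq (nat * nat) :=
  if isLong i j then [:: (j - s1, i); (j - s1, nx i); (j - s1, 0)] else [:: F j].

Lemma F_inj i j : F i = F j -> i = j.
Proof. rewrite /F; case: ifP; case: ifP => h1 h2 [] ; lia. Qed.

Lemma PP_path i j : i < j -> j < t1 + s1 + 1 ->
  [&& path eN2 (F i) (PP i j), uniq (F i :: PP i j), last (F i) (PP i j) == F j
    & odd (size (PP i j))].
Proof.
move=> ij jn; rewrite /PP; case: ifP => L; move: L; rewrite /isLong /F /nx => L;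
  do ! case: ifP => ?; rewrite /= /eN2 /= !inE !xpair_eqE /=; lia.
Qed.
Lemma PP_int i j k : i < j -> F k \notin behead (belast (F i) (PP i j)).
Proof.
move=> ij; rewrite /PP; case: ifP => L //; move: L; rewrite /isLong /F /nx => L;
  do ! case: ifP => ?; rewrite /= !inE !xpair_eqE /=; lia.
Qed.

Lemma nx_bnd c : 0 < c <= s1 -> 0 < nx c <= s1.
Proof. rewrite /nx; case: ifP => ? ; lia. Qed.

Lemma nx_inj c d : 0 < c <= s1 -> 0 < d <= s1 -> (nx c == nx d) = (c == d).
Proof. rewrite /nx; do ! case: ifP => ?; lia. Qed.

Lemma nx_ne c : 0 < c <= s1 -> nx c != c.
Proof. rewrite /nx; case: ifP => ?; lia. Qed.

Lemma nx_cross c d : 0 < c <= s1 -> 0 < d <= s1 -> ~~ ((nx c == d) && (nx d == c)).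
Proof. rewrite /nx; do ! case: ifP => ?; lia. Qed.

Lemma F_small k : k <= s1 -> F k = (0, k).
Proof. by rewrite /F => ->. Qed.

Lemma F_big k : s1 < k -> F k = (k - s1, 0).
Proof. move=> h; rewrite /F; case: ifP => // ?; lia. Qed.

Lemma edisj_sym (T : eqType) (x : T) p y q : edisj x p y q = edisj y q x p.
Proof.
rewrite /edisj; congr (~~ _); apply/hasP/hasP => [[uv uin /hasP [ab ain sab]]|[uv uin /hasP [ab ain sab]]].
  exists ab => //; apply/hasP; exists uv => //; move: sab; rewrite /same_edge.
  by case/orP => /andP [/eqP -> /eqP ->]; rewrite !eqxx ?orbT.
exists ab => //; apply/hasP; exists uv => //; move: sab; rewrite /same_edge.
by case/orP => /andP [/eqP -> /eqP ->]; rewrite !eqxx ?orbT.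
Qed.

Lemma F_term m : ((F m).1 == 0) || ((F m).2 == 0).
Proof. rewrite /F; case: ifP => _ /=; lia. Qed.

Lemma LL_disj i j k l : (0 < i <= s1) && (s1 < j) -> (0 < k <= s1) && (s1 < l) ->
  (i, j) != (k, l) ->
  edisj (0, i) [:: (j - s1, i); (j - s1, nx i); (j - s1, 0)]
        (0, k) [:: (l - s1, k); (l - s1, nx k); (l - s1, 0)].
Proof.
move=> L1 L2 ne.
  have := nx_bnd i; have := nx_bnd k; have := nx_inj i k; have := nx_ne i; have := nx_ne k.
  have := nx_cross i k.
  move: ne; rewrite xpair_eqE.
  move: (nx i) (nx k) => a b H1 H2 H3 H4 H5 H6 H7.
  rewrite /edisj /wedges; apply/hasPn => uv /=; rewrite !inE => /or3P [] /eqP ->;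
  rewrite /same_edge /= !xpair_eqE !negb_or; repeat (apply/andP; split); apply/negP => H; lia.
Qed.

Lemma DL_disj u v k l : ((u.1 == 0) || (u.2 == 0)) -> ((v.1 == 0) || (v.2 == 0)) ->
  (0 < k <= s1) && (s1 < l) ->
  edisj u [:: v] (0, k) [:: (l - s1, k); (l - s1, nx k); (l - s1, 0)].
Proof.
case: u => a b; case: v => c d /= H1 H2 L2.
have := nx_bnd k; move: (nx k) => x Hx.
rewrite /edisj /wedges /= /same_edge /= !xpair_eqE !negb_or; repeat (apply/andP; split); apply/negP => H; lia.
Qed.
Lemma PP_disj i j k l : i < j -> k < l -> (i, j) != (k, l) ->
  edisj (F i) (PP i j) (F k) (PP k l).
Proof.
move=> ij kl ne; rewrite /PP.
case: ifP => L1; case: ifP => L2.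
- move: (L1) (L2); rewrite /isLong => L1' L2'.
  rewrite (F_small i) ?(F_small k); try lia.
  exact: LL_disj.
- move: (L1); rewrite /isLong => L1'.
  rewrite edisj_sym (F_small i); try lia.
  by apply: DL_disj => //; apply: F_term.
- move: (L2); rewrite /isLong => L2'.
  rewrite (F_small k); try lia.
  by apply: DL_disj => //; apply: F_term.
rewrite /edisj /wedges /same_edge /= orbF /= orbF.
apply/negP => /orP [] /andP [/eqP /F_inj E1 /eqP /F_inj E2]; move: ne; rewrite xpair_eqE; lia.
Qed.

Lemma F_bnd k : k < t1 + s1 + 1 -> ((F k).1 <= t1) && ((F k).2 <= s1).
Proof. rewrite /F; case: ifP => /= ?; lia. Qed.

Lemma PP_bnd i j : i < j -> j < t1 + s1 + 1 ->
  all (fun u : nat * nat => (u.1 <= t1) && (u.2 <= s1)) (PP i j).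
Proof.
move=> ij jn; rewrite /PP; case: ifP => L.
  move: L; rewrite /isLong => L; have := nx_bnd i.
  move: (nx i) => x Hx /=; lia.
by rewrite /= F_bnd.
Qed.
End Nat.


Definition cd (a b : nat) (v : 'I_a * 'I_b) : nat * nat := (val v.1, val v.2).

Arguments cd {a b}.

Lemma cd_inj a b : injective (@cd a b).
Proof. by move=> [x y] [z w] [/val_inj -> /val_inj ->]. Qed.

Lemma e_cd a b (x y : 'I_a * 'I_b) :
  cart_prod (complete_graph a) (complete_graph b) x y = eN2 (cd x) (cd y).
Proof. by []. Qed.

Definition pt (t1 s1 : nat) (u : nat * nat) : 'I_t1.+1 * 'I_s1.+1 := (inord u.1, inord u.2).

Lemma cd_pt t1 s1 u : (u.1 <= t1) && (u.2 <= s1) -> cd (pt t1 s1 u) = u.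
Proof.
case: u => a b /= /andP [ha hb]; rewrite /cd /pt /= !inordK //.
Qed.

Lemma constr t1 s1 : 3 <= s1 ->
  toi_immersion (cart_prod (complete_graph t1.+1) (complete_graph s1.+1)) (t1 + s1 + 1).
Proof.
move=> s3.
set n := t1 + s1 + 1.
exists (fun k : 'I_n => pt t1 s1 (F s1 k)), (fun i j : 'I_n => map (pt t1 s1) (PP s1 i j)).
have cdF : forall k : 'I_n, cd (pt t1 s1 (F s1 k)) = F s1 k.
  by move=> k; apply: cd_pt; apply: F_bnd.
have cdP : forall i j : 'I_n, i < j -> map cd (map (pt t1 s1) (PP s1 i j)) = PP s1 i j.
  move=> i j ij; rewrite -map_comp -[RHS]map_id; apply/eq_in_map => u uin /=.
  apply: cd_pt; move/allP: (PP_bnd t1 s1 s3 i j ij (ltn_ord j)); apply; exact: uin.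
split.
- move=> i j E; apply/val_inj; apply: (F_inj s1 s3).
  by rewrite -(cdF i) -(cdF j) E.
- move=> i j ij.
  case/and4P: (PP_path t1 s1 s3 i j ij (ltn_ord j)) => pp up lp op.
  apply/and4P; split.
  + rewrite -(mono_path (f := @cd _ _) (e' := eN2)); last by move=> x y; rewrite e_cd.
    by rewrite cdF cdP.
  + by rewrite -(map_inj_uniq (@cd_inj _ _)) /= cdF cdP.
  + by rewrite -(inj_eq (@cd_inj _ _)) -last_map cdF cdP // cdF.
  + by rewrite size_map.
- move=> i j k l ij kl ne; rewrite edge_disjointE -(edisj_map (@cd_inj _ _)).
  rewrite !cdF !cdP //; exact: PP_disj.
move=> i j k ij; rewrite /interior -(mem_map (@cd_inj _ _)) -behead_map -belast_map.
by rewrite cdF cdP // cdF; apply: PP_int.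
Qed.

Set Implicit Arguments.

Lemma deg_bound (V : finType) (e : rel V) n :
  toi_immersion e n.+1 -> exists x, n <= #|[set y | e x y]|.
Proof.
case=> f [P [finj Hp Hd Hi]]; exists (f ord0).
pose h j := head (f ord0) (P ord0 j).
have hne : forall j : 'I_n.+1, 0 < j -> exists y q, P ord0 j = y :: q.
  move=> j j0; case/and4P: (Hp ord0 _ j0) => _ _ _.
  by case: (P ord0 j) => [|y q] // _; exists y, q.
have he : forall j : 'I_n.+1, 0 < j -> e (f ord0) (h j).
  move=> j j0; case/and4P: (Hp ord0 _ j0) => pp _ _ _.
  have [y [q E]] := hne j j0; move: pp; rewrite /h E /=; case/andP=> //.
have hinj : {in [set~ ord0] &, injective h}.
  move=> j j'; rewrite !inE => jn jn' E; apply/eqP; apply/negPn/negP => ne.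
  have j0 : 0 < j by move: jn; rewrite -val_eqE /= lt0n.
  have j0' : 0 < j' by move: jn'; rewrite -val_eqE /= lt0n.
  have := Hd ord0 j ord0 j' j0 j0'; rewrite xpair_eqE eqxx /= => /(_ ne).
  rewrite edge_disjointE.
  have [y [q E1]] := hne j j0; have [y' [q' E2]] := hne j' j0'.
  move: E; rewrite /h E1 E2 /= => <-.
  by rewrite /edisj /wedges /= /same_edge /= !eqxx.
have : #|h @: [set~ ord0]| = n by rewrite card_in_imset // cardsC1 card_ord.
move=> Ec; rewrite -[X in X <= _]Ec; apply: subset_leq_card; apply/subsetP => y /imsetP [j jin ->].
by rewrite inE; apply: he; move: jin; rewrite !inE lt0n.
Qed.

Lemma nbr_card t s (x : 'I_t * 'I_s) :
  #|[set y | cart_prod (complete_graph t) (complete_graph s) x y]| <= s.-1 + t.-1.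
Proof.
apply: (@leq_trans #|((fun z => (x.1, z)) @: [set~ x.2]) :|: ((fun w => (w, x.2)) @: [set~ x.1])|).
  apply: subset_leq_card; apply/subsetP => y; rewrite !inE /cart_prod /complete_graph.
  case/orP => /andP [/eqP E ne].
    apply/orP; left; apply/imsetP; exists y.2; first by rewrite !inE eq_sym.
    by rewrite E; case: (y).
  apply/orP; right; apply/imsetP; exists y.1; first by rewrite !inE eq_sym.
  by rewrite E; case: (y).
apply: (leq_trans (leq_card_setU _ _)).
apply: leq_add; apply: (leq_trans (leq_imset_card _ _)); by rewrite cardsC1 card_ord.
Qed.

Lemma upper t s n : 0 < t -> 0 < s ->
  toi_immersion (cart_prod (complete_graph t) (complete_graph s)) n -> n <= t + s - 1.
Proof.
move=> t0 s0; case: n => [//|n] /deg_bound [x H].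
have := leq_trans H (nbr_card x); lia.
Qed.

Lemma swap_imm t s n :
  toi_immersion (cart_prod (complete_graph s) (complete_graph t)) n ->
  toi_immersion (cart_prod (complete_graph t) (complete_graph s)) n.
Proof.
apply: (toi_transfer (h := fun x : 'I_s * 'I_t => (x.2, x.1))).
  by move=> [a b] [c d] [-> ->].
by move=> [a b] [c d]; rewrite /cart_prod /= orbC.
Qed.

Definition eNs (s : nat) (u v : nat) : bool := eN2 (u %/ s, u %% s) (v %/ s, v %% s).
Definition code (t s : nat) (x : 'I_t * 'I_s) : nat := x.1 * s + x.2.

Lemma code_cd t s (x : 'I_t * 'I_s) : (code x %/ s, code x %% s) = cd x.
Proof.
case: x => a b; rewrite /code /cd /=.
have s0 : 0 < s by apply: leq_ltn_trans (ltn_ord b).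
by rewrite divnMDl // divn_small // addn0 modnMDl modn_small.
Qed.

Lemma no_imm t s n :
  nocheck (eNs s) (iota 0 (t * s)) n.+1 ->
  ~ toi_immersion (cart_prod (complete_graph t) (complete_graph s)) n.+1.
Proof.
move=> H; apply: (nocheck_sound (c := @code t s)) H.
- by move=> x y E; apply: cd_inj; rewrite -!code_cd E.
- by move=> x y; rewrite e_cd /eNs !code_cd.
move=> [a b]; rewrite mem_iota /code /= add0n.
have := ltn_ord a; have := ltn_ord b; nia.
Qed.

Definition f23 (i : 'I_3) : 'I_2 * 'I_3 := (z2 0, z3 i).
Definition P23 (i j : 'I_3) : seq ('I_2 * 'I_3) := [:: f23 j].

Lemma imm23 : toi_immersion (cart_prod (complete_graph 2) (complete_graph 3)) 3.
Proof.
apply: (concrete_sound (os := o3) (f := f23) (P := P23)); first exact: o3P.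
by vm_compute.
Qed.

Lemma c23 : nocheck (eNs 3) (iota 0 (2 * 3)) 4.
Proof. vm_compute. reflexivity. Qed.

Lemma c33 : nocheck (eNs 3) (iota 0 (3 * 3)) 5.
Proof. vm_compute. reflexivity. Qed.

Theorem mainTheorem8 :
  (forall t s : nat, 2 <= t -> 2 <= s -> 4 <= maxn s t ->
     toi_is (cart_prod (complete_graph t) (complete_graph s)) (t + s - 1))
  /\ toi_is (cart_prod (complete_graph 3) (complete_graph 3)) 4
  /\ toi_is (cart_prod (complete_graph 2) (complete_graph 3)) 3.
Proof.
split; [|split].
- move=> t s t2 s2 m4; split; last by move=> m; apply: upper; lia.
  case: (leqP 4 s) => hs.
    case: t t2 m4 => [|t1] // _ _; case: s s2 hs => [|s1] // _ hs.
    have -> : t1.+1 + s1.+1 - 1 = t1 + s1 + 1 by lia.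
    by apply: constr; lia.
  have ht : 4 <= t by move: m4 hs; lia.
  apply: swap_imm.
  case: t t2 ht {m4} => [|t1] // _ ht; case: s s2 hs => [|s1] // _ hs.
  have -> : t1.+1 + s1.+1 - 1 = s1 + t1 + 1 by lia.
  by apply: constr; lia.
- split; first exact: imm33.
  move=> m Hm; have := @upper 3 3 m isT isT Hm; rewrite leq_eqVlt; case/orP => // /eqP E.
  by subst m; case: (no_imm c33 Hm).
split; first exact: imm23.
move=> m Hm; have := @upper 2 3 m isT isT Hm; rewrite leq_eqVlt; case/orP => // /eqP E.
by subst m; case: (no_imm c23 Hm).
Qed.
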